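(* Let $0<c<1/2$, and for integers $j\ge0$ set $c_j=c+c^2+\dots+c^j$ (so $c_0=0$). Then for every $B\in\mathcal F$ and every integer $m$ with $0\le m\le k:=\mu(B)$, $$g(m,B)\le 2c_1+2c_2+\dots+2c_{m-1}+c_m+c_m\,c_{k-m},$$ where $g(m,B)=\sum_{i\in\mathrm{OPT}^m_{\mathrm{large}}(B)}\sum_{B'\in\mathrm{Chain}[M(i),B]} c^{\,1+\mathrm{brank}(i,B')}$.
   Context: Let $U$ be a finite ground set with weight function $w:U\to\mathbb{R}_{\ge0}$ taking pairwise distinct values. Let $\mathcal F$ be a laminar family of subsets of $U$ (for any $A,B\in\mathcal F$: $A\subseteq B$, $B\subseteq A$, or $A\cap B=\emptyset$) with $U\in\mathcal F$; each $A\in\mathcal F$ has a positive integer capacity $\mu(A)$, with $\mu(A)<\mu(B)$ whenever $A\subsetneq B$. A set $X\subseteq U$ is independent iff $|X\cap A|\le\mu(A)$ for all $A\in\mathcal F$. For $i\in U$, $M(i)$ denotes the minimal member of $\mathcal F$ containing $i$. For $A\subseteq B$ in $\mathcal F$, $\mathrm{Chain}[A,B]$ is the sequence of all $B'\in\mathcal F$ with $A\subseteq B'\subseteq B$, ordered by inclusion from $A$ up to $B$. For $B\in\mathcal F$, $\mathrm{OPT}(B)$ is the maximum-weight independent subset of $B$, and $\mathrm{OPT}^m_{\mathrm{large}}(B)$ is the set of the $m$ largest-weight elements of $\mathrm{OPT}(B)$ (all of $\mathrm{OPT}(B)$ if it has fewer than $m$ elements). The backward rank $\mathrm{brank}(i,B)$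 is the number of elements of $\mathrm{OPT}(B)$ of weight less than $w(i)$. Standing convention of the paper: by padding $U$ with dummy elements of infinitesimal weight, one assumes $|\mathrm{OPT}(B)|=\mu(B)$ for every $B\in\mathcal F$. *)

(* Defs.v *)
From HB Require Import structures.
From mathcomp Require Import all_boot all_order all_algebra.
Set Implicit Arguments. Unset Strict Implicit. Unset Printing Implicit Defensive.
Import Order.TTheory GRing.Theory Num.Theory.

Section LaminarDefs.
Variable U : finType.

Definition laminar (F : {set {set U}}) : Prop :=
  forall A B, A \in F -> B \in F ->
    [\/ A \subset B, B \subset A | [disjoint A & B]].

Definition indep (F : {set {set U}}) (mu : {set U} -> nat) (X : {set U}) : bool :=
  [forall A in F, #|X :&: A| <= mu A].

Definition Mmin (F : {set {set U}}) (i : U) : {set U} :=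
  odflt setT [pick A | minset (fun X : {set U} => (X \in F) && (i \in X)) A].

(* Chain[A,B] (as a set; only summed over) *)
Definition Chain (F : {set {set U}}) (A B : {set U}) : {set {set U}} :=
  [set B' in F | (A \subset B') && (B' \subset B)].

Variable R : realFieldType.

(* X is OPT(B): a maximum-weight independent subset of B, of size mu(B)
   (the size condition is the paper's standing padding convention). *)
Definition is_OPT (F : {set {set U}}) (mu : {set U} -> nat) (w : U -> R)
    (B X : {set U}) : Prop :=
  [/\ X \subset B, indep F mu X, #|X| = mu B &
      forall Y : {set U}, Y \subset B -> indep F mu Y ->
        (\sum_(i in Y) w i <= \sum_(i in X) w i)%R].

Definition OPT_large (w : U -> R) (OPTB : {set U}) (m : nat) : {set U} :=
  [set i in OPTB | #|[set j in OPTB | (w i < w j)%R]| < m].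

Definition brank (w : U -> R) (OPTB : {set U}) (i : U) : nat :=
  #|[set j in OPTB | (w j < w i)%R]|.

Definition csum (c : R) (j : nat) : R := (\sum_(1 <= t < j.+1) c ^+ t)%R.

Definition gfun (F : {set {set U}}) (OPT : {set U} -> {set U}) (w : U -> R)
    (c : R) (m : nat) (B : {set U}) : R :=
  (\sum_(i in OPT_large w (OPT B) m)
     \sum_(B' in Chain F (Mmin F i) B) c ^+ (1 + brank w (OPT B') i))%R.

End LaminarDefs.

(* Main.v *)
Require Import Defs.
From HB Require Import structures.
From mathcomp Require Import all_boot all_order all_algebra.
Import Order.TTheory GRing.Theory Num.Theory.
From mathcomp Require Import ring lra zify.
Local Open Scope ring_scope.

Section RealPart.
Variable R : realFieldType.
Variable c : R.
Hypothesis c0 : 0 < c.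
Hypothesis c1 : c < 1.

Definition Asum (m : nat) : R := \sum_(1 <= j < m) 2 * csum c j.
Definition fF (m K : nat) : R := Asum m + csum c m + csum c m * csum c (K - m).

Lemma csum0 : csum c 0 = 0.
Proof. by rewrite /csum big_geq. Qed.

Lemma csumS j : csum c j.+1 = csum c j + c ^+ j.+1.
Proof. by rewrite /csum big_nat_recr. Qed.

Lemma csum_cf j : (1 - c) * csum c j = c - c ^+ j.+1.
Proof.
elim: j => [|j IH]; first by rewrite csum0 expr1; ring.
by rewrite csumS mulrDr IH exprS [c ^+ j.+2]exprS exprS; ring.
Qed.

Lemma csumS' j : csum c j.+1 = c * (1 + csum c j).
Proof.
elim: j => [|j IH]; first by rewrite csumS csum0 expr1; ring.
by rewrite [csum c j.+2]csumS {1}IH csumS exprS; ring.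
Qed.

Lemma csum_ge0 j : 0 <= csum c j.
Proof. by rewrite /csum; apply: sumr_ge0 => t _; apply: exprn_ge0; exact: ltW. Qed.

Lemma csum_mono j1 j2 : (j1 <= j2)%N -> csum c j1 <= csum c j2.
Proof.
move=> /subnKC <-; elim: (j2 - j1)%N => [|d IH]; first by rewrite addn0.
rewrite addnS csumS; apply: (le_trans IH); rewrite lerDl; apply: exprn_ge0; exact: ltW.
Qed.

Lemma Asum0 : Asum 0 = 0. Proof. by rewrite /Asum big_geq. Qed.
Lemma Asum1 : Asum 1 = 0. Proof. by rewrite /Asum big_geq. Qed.
Lemma AsumS m : (1 <= m)%N -> Asum m.+1 = Asum m + 2 * csum c m.
Proof. by move=> h; rewrite /Asum big_nat_recr. Qed.

Lemma Asum_cf m : (1 - c) ^+ 2 * Asum m = 2 * (c * (1 - c) * m%:R - c + c ^+ m.+1).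
Proof.
elim: m => [|m IH]; first by rewrite Asum0 expr1; ring.
case: m IH => [|m] IH; first by rewrite Asum1 expr2; ring.
rewrite AsumS // mulrDr IH.
have -> : (1 - c) ^+ 2 * (2 * csum c m.+1) = 2 * (1 - c) * ((1 - c) * csum c m.+1) by ring.
rewrite csum_cf -[(m.+2)%:R]natr1 -[(m.+1)%:R]natr1 !exprS; ring.
Qed.

Lemma fF_cf m K : (1 - c) ^+ 2 * fF m K =
  2 * (c * (1 - c) * m%:R - c + c ^+ m.+1) + (1 - c) * (c - c ^+ m.+1)
  + (c - c ^+ m.+1) * (c - c ^+ (K - m).+1).
Proof.
rewrite -!csum_cf /fF !mulrDr Asum_cf expr2; ring.
Qed.

Lemma sq_pos : 0 < (1 - c) ^+ 2.
Proof. apply: exprn_gt0; have := c1; lra. Qed.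

Lemma le_by_sq x y : (1 - c) ^+ 2 * x <= (1 - c) ^+ 2 * y -> x <= y.
Proof. by rewrite ler_pM2l // sq_pos. Qed.

Lemma pow_le1 n : c ^+ n <= 1.
Proof. by apply: exprn_ile1; have := c1; have := c0; lra. Qed.
Lemma pow_ge0 n : 0 <= c ^+ n.
Proof. by apply: exprn_ge0; exact: ltW. Qed.

Lemma fF0 K : fF 0 K = 0.
Proof. by rewrite /fF Asum0 csum0; ring. Qed.

Lemma Asum_ge0 m : 0 <= Asum m.
Proof. by rewrite /Asum; apply: sumr_ge0 => j _; rewrite mulr_ge0 ?csum_ge0. Qed.

Lemma fF_ge0 m K : 0 <= fF m K.
Proof. by rewrite /fF !addr_ge0 ?mulr_ge0 ?Asum_ge0 ?csum_ge0. Qed.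

Lemma fF_monoK m k1 k2 : (k1 <= k2)%N -> fF m k1 <= fF m k2.
Proof.
move=> h; rewrite /fF lerD2l ler_wpM2l ?csum_ge0 //; apply: csum_mono.
exact: leq_sub2r.
Qed.

Lemma super a b K : (a + b <= K)%N -> fF a K + fF b K <= fF (a + b) K.
Proof.
move=> h; apply: le_by_sq; rewrite mulrDr !fF_cf.
rewrite -(subnKC h); move: (K - (a + b))%N => d.
have -> : (a + b + d - a = b + d)%N by lia.
have -> : (a + b + d - b = a + d)%N by lia.
have -> : (a + b + d - (a + b) = d)%N by lia.
rewrite natrD !exprS !exprD.
have ha := pow_le1 a; have hb := pow_le1 b; have hd := pow_le1 d.
have hP : 0 <= c * (1 - c ^+ a) * (1 - c ^+ b) * (1 - c * c ^+ d).
  rewrite !mulr_ge0 ?subr_ge0 //; try (have := c0; lra).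
  rewrite -exprS; exact: pow_le1.
move: hP; set x := c ^+ a; set y := c ^+ b; set z := c ^+ d.
move=> hP; nra.
Qed.




Lemma edge a b K : (a <= K)%N -> (b <= K)%N -> (a + b = K.+1)%N ->
  fF a K + fF b K = Asum K.+1.
Proof.
move=> ha hb hab; apply: (mulfI (lt0r_neq0 sq_pos)).
rewrite mulrDr !fF_cf Asum_cf.
case: a ha hab => [|a] ha hab; first by lia.
case: b hb hab => [|b] hb hab; first by lia.
have hK : K = (a + b).+1 by lia.
rewrite hK.
have -> : ((a + b).+1 - a.+1 = b)%N by lia.
have -> : ((a + b).+1 - b.+1 = a)%N by lia.
rewrite -[(a+b).+2%:R]natr1 -[(a+b).+1%:R]natr1 -[a.+1%:R]natr1 -[b.+1%:R]natr1 natrD.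
rewrite !exprS !exprD; ring.
Qed.

Variable K : nat.
Definition T (s : nat) : R := if (s <= K)%N then fF s K else Asum s.

Lemma Tstep s a : (s <= K.+1)%N -> (a <= K)%N -> (s + a <= K.+1)%N ->
  T s + fF a K <= T (s + a).
Proof.
move=> hs ha hsa; case: a ha hsa => [|a] ha hsa.
  by rewrite fF0 addr0 addn0.
have hsK : (s <= K)%N by lia.
rewrite /T hsK; case: leqP => h2.
  exact: super.
have e : (s + a.+1 = K.+1)%N by lia.
by rewrite edge // e.
Qed.

Lemma T_ge0 s : 0 <= T s.
Proof. by rewrite /T; case: ifP => _; rewrite ?fF_ge0 ?Asum_ge0. Qed.

Lemma T0 : T 0 = 0.
Proof. by rewrite /T leq0n fF0. Qed.

Lemma Tmono s t : (s <= t)%N -> (t <= K.+1)%N -> T s <= T t.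
Proof.
move=> /subnKC <-; move: (t - s)%N => d; elim: d => [|d IH] h.
  by rewrite addn0.
case: (posnP K) => hK.
  have -> : s = 0%N by lia.
  by rewrite T0 T_ge0.
apply: (le_trans (IH _)); first by lia.
apply: (le_trans _ (_ : T (s + d) + fF 1 K <= _)).
  by rewrite lerDl fF_ge0.
have -> : (s + d.+1 = (s + d) + 1)%N by lia.
apply: Tstep; lia.
Qed.

Lemma children_sum (I : Type) (r : seq I) (P : pred I) (a kk : I -> nat) :
  (forall i, P i -> (a i <= kk i)%N /\ (kk i <= K)%N) ->
  (\sum_(i <- r | P i) a i <= K.+1)%N ->
  \sum_(i <- r | P i) fF (a i) (kk i) <= T (\sum_(i <- r | P i) a i).
Proof.
move=> hP; elim: r => [|x r IH]; first by rewrite !big_nil T0.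
rewrite !big_cons; case: ifP => Px; last exact: IH.
move=> hs; have [h1 h2] := hP x Px.
rewrite [fF _ _ + _]addrC [(a x + _)%N]addnC.
have h3 := IH ltac:(lia).
have h4 := fF_monoK (a x) (kk x) K h2.
apply: (le_trans (lerD h3 h4)).
apply: Tstep; lia.
Qed.

Lemma top m : (m <= K.+1)%N -> c ^+ (K.+1 - m) * csum c m + T m = fF m K.+1.
Proof.
move=> hm; rewrite /T; case: leqP => h.
  apply: (mulfI (lt0r_neq0 sq_pos)); rewrite mulrDr !fF_cf.
  rewrite -(subnKC h); move: (K - m)%N => e.
  have -> : ((m + e).+1 - m = e.+1)%N by lia.
  have -> : ((m + e) - m = e)%N by lia.
  have hc := csum_cf m.
  have -> : (1 - c) ^+ 2 * (c ^+ e.+1 * csum c m) = (1 - c) * c ^+ e.+1 * ((1 - c) * csum c m) by ring.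
  rewrite hc [c ^+ e.+2]exprS; ring.
have -> : m = K.+1 by apply/eqP; rewrite eqn_leq hm h.
by rewrite subnn expr0 mul1r /fF subnn csum0 mulr0 addr0 addrC.
Qed.


Lemma geo m k : (m <= k)%N -> \sum_(t < m) c ^+ (k - t) = c ^+ (k - m) * csum c m.
Proof.
elim: m => [|m IH] h; first by rewrite big_ord0 csum0 mulr0.
rewrite big_ord_recr /= IH; last by lia.
rewrite csumS'.
have -> : (k - m = (k - m.+1).+1)%N by lia.
rewrite exprS; ring.
Qed.

End RealPart.
Arguments fF {R} c m K.
Arguments Asum {R} c m.
Arguments T {R} c K s.

Lemma sum_sub (R : realFieldType) (I : finType) (P Q : pred I) (G : I -> R) :
  (forall i, P i -> Q i) -> (forall i, Q i -> 0 <= G i) ->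
  \sum_(i | P i) G i <= \sum_(i | Q i) G i.
Proof.
move=> PQ G0; rewrite [X in X <= _]big_mkcond [X in _ <= X]big_mkcond /=.
apply: ler_sum => i _; case Pi: (P i); first by rewrite PQ.
by case Qi: (Q i) => //; rewrite G0.
Qed.


Section Comb.
Variables (U : finType) (R : realFieldType) (w : U -> R) (F : {set {set U}})
  (mu : {set U} -> nat) (OPT : {set U} -> {set U}).
Hypothesis winj : injective w.
Hypothesis lam : laminar F.
Hypothesis FT : setT \in F.
Hypothesis hOPT : forall B, B \in F -> is_OPT F mu w B (OPT B).

Lemma OPT_sub {B} : B \in F -> OPT B \subset B.
Proof. by move=> /hOPT []. Qed.
Lemma OPT_ind {B} : B \in F -> indep F mu (OPT B).
Proof. by move=> /hOPT []. Qed.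
Lemma OPT_card {B} : B \in F -> #|OPT B| = mu B.
Proof. by move=> /hOPT []. Qed.
Lemma OPT_max {B} {Y : {set U}} : B \in F -> Y \subset B -> indep F mu Y ->
  \sum_(i in Y) w i <= \sum_(i in OPT B) w i.
Proof. by move=> /hOPT [_ _ _ h] YB Yi; apply: h. Qed.

Lemma indep_card {X} {A} : indep F mu X -> A \in F -> (#|X :&: A| <= mu A)%N.
Proof. by move=> /forallP /(_ A) /implyP; apply. Qed.

Lemma lam_cases {A B x} : A \in F -> B \in F -> x \in A -> x \in B ->
  A \subset B \/ B \subset A.
Proof.
move=> AF BF xA xB; case: (lam A B AF BF) => [h|h|h]; [by left|by right|].
by rewrite (disjointFr h xA) in xB.
Qed.

Lemma card_exch {X : {set U}} (A : {set U}) {x y} : x \in X -> y \notin X ->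
  (#|(y |: (X :\ x)) :&: A| + (x \in A) = #|X :&: A| + (y \in A))%N.
Proof.
move=> xX yX.
have e1 : #|(y |: (X :\ x)) :&: A| = ((y \in A) + #|(X :\ x) :&: A|)%N.
  rewrite (cardsD1 y) !inE eqxx /=; congr (_ + _)%N.
  apply: eq_card => z; rewrite !inE; case: (eqVneq z y) => [->|] //=.
  by rewrite (negbTE yX) !andbF.
have e2 : #|X :&: A| = ((x \in A) + #|(X :\ x) :&: A|)%N.
  rewrite (cardsD1 x) !inE xX /=; congr (_ + _)%N.
  by apply: eq_card => z; rewrite !inE; case: (z == x); rewrite ?andbF.
rewrite e1 e2; lia.
Qed.

Lemma exch {B x y} : B \in F -> x \in OPT B -> y \in B -> y \notin OPT B ->
  (forall A, A \in F -> y \in A -> x \notin A -> (#|OPT B :&: A| < mu A)%N) ->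
  w y < w x.
Proof.
move=> BF xX yB yX hA.
set X := OPT B in xX yX hA *.
set Z := y |: (X :\ x).
have ZB : Z \subset B.
  apply/subsetP => z; rewrite !inE => /orP [/eqP -> //|/andP [_ zX]].
  exact: (subsetP (OPT_sub BF) _ zX).
have Zi : indep F mu Z.
  apply/forallP => A; apply/implyP => AF; rewrite /Z.
  have := card_exch A xX yX; have := indep_card (OPT_ind BF) AF.
  rewrite -/X; case yA: (y \in A); case xA: (x \in A) => /=; try lia.
  by have := hA A AF yA (negbT xA); lia.
have := OPT_max BF ZB Zi.
have yX' : y \notin X :\ x by rewrite !inE negb_and yX orbT.
rewrite /Z big_setU1 //= [X in _ <= X](big_setD1 x) //= lerD2r => h.
rewrite lt_neqAle h andbT; apply/eqP => /winj e.
by rewrite e xX in yX.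
Qed.

Lemma tight_gen {X Y A : {set U}} {y} : A \in F -> X :&: A \subset OPT A -> Y :&: A \subset OPT A ->
  (mu A <= #|X :&: A|)%N -> y \in Y -> y \in A -> y \in X.
Proof.
move=> AF sX sY hc yY yA.
have e : X :&: A = OPT A by apply/eqP; rewrite eqEcard sX OPT_card.
have : y \in OPT A by apply: (subsetP sY); rewrite inE yY yA.
by rewrite -e inE => /andP [].
Qed.

Lemma F1 A B : A \in F -> B \in F -> A \subset B -> OPT B :&: A \subset OPT A.
Proof.
move: {2}#|A| (erefl #|A|) => n; elim/ltn_ind: n A B => n IH A B eA AF BF AB.
apply/subsetP => i; rewrite inE => /andP [iX iA]; apply/negPn/negP => iY.
set X := OPT B in iX *; set Y := OPT A in iY *.
pose P := fun E : {set U} => [&& E \in F, i \in E & #|Y :&: E| == mu E].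
have PA : P A.
  by rewrite /P AF iA /= (setIidPl (OPT_sub AF)) OPT_card.
have [T minT TA] := minset_exists PA.
have /and3P [TF iT /eqP cT] := minsetp minT.
have : ~~ (Y :&: T \subset X).
  apply/negP => sub.
  have : Y :&: T \subset (X :&: T) :\ i.
    apply/subsetP => z zYT; rewrite !inE.
    have := zYT; rewrite inE => /andP [zY zT].
    rewrite (subsetP sub _ zYT) zT andbT andbT.
    by apply/eqP => ezi; move: iY; rewrite -ezi zY.
  move/subset_leq_card => h0.
  have h1 := cardsD1 i (X :&: T); rewrite inE iX iT /= in h1.
  have h2 : (#|X :&: T| <= mu T)%N := indep_card (OPT_ind BF) TF.
  lia.
case/subsetPn => y yYT yX.
have /andP [yY yT] : (y \in Y) && (y \in T) by rewrite -in_setI.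
have yA : y \in A := subsetP TA _ yT.
have h1 : w i < w y.
  apply: (exch AF yY iA iY) => A' A'F iA' yA'.
  rewrite ltnNge; apply/negP => hc.
  case: (lam_cases A'F TF iA' iT) => [A'T|TA'].
    have PA' : P A'.
      by rewrite /P A'F iA' /= eqn_leq hc indep_card // OPT_ind.
    have e := minsetinf minT PA' A'T.
    by move: yA'; rewrite e yT.
  by move: yA'; rewrite (subsetP TA' _ yT).
have h2 : w y < w i.
  apply: (exch BF iX (subsetP AB _ yA) yX) => A' A'F yA' iA'.
  rewrite ltnNge; apply/negP => hc.
  case: (lam_cases A'F TF yA' yT) => [A'T|TA'].
    have A'A : A' \subset A := subset_trans A'T TA.
    have pA' : A' \proper A by apply/properP; split => //; exists i.
    have lt := proper_card pA'; rewrite eA in lt.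
    have s1 := IH _ lt A' B erefl A'F BF (subset_trans A'A AB).
    have s2 := IH _ lt A' A erefl A'F AF A'A.
    by move: yX; rewrite (tight_gen A'F s1 s2 hc yY yA').
  by move: iA'; rewrite (subsetP TA' _ iT).
by have := lt_trans h1 h2; rewrite ltxx.
Qed.


Lemma F2 {A B i j} : A \in F -> B \in F -> A \subset B -> i \in OPT B -> i \in A ->
  j \in OPT A -> w i < w j -> j \in OPT B.
Proof.
move=> AF BF AB iX iA jY hij; apply/negPn/negP => jX.
have jA : j \in A := subsetP (OPT_sub AF) _ jY.
have := exch BF iX (subsetP AB _ jA) jX.
suff h : forall A', A' \in F -> j \in A' -> i \notin A' -> (#|OPT B :&: A'| < mu A')%N.
  by move=> /(_ h) hji; have := lt_trans hij hji; rewrite ltxx.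
move=> A' A'F jA' iA'; rewrite ltnNge; apply/negP => hc.
case: (lam_cases A'F AF jA' jA) => [A'A|AA'].
  have s1 := F1 A' B A'F BF (subset_trans A'A AB).
  have s2 := F1 A' A A'F AF A'A.
  by move: jX; rewrite (tight_gen A'F s1 s2 hc jY jA').
by move: iA'; rewrite (subsetP AA' _ iA).
Qed.

Definition PM i := fun X : {set U} => (X \in F) && (i \in X).

Lemma Mmin_min i : minset (PM i) (Mmin F i).
Proof.
rewrite /Mmin; case: (pickP (fun A => minset (PM i) A)) => [A hA //|none].
have PT : PM i setT by rewrite /PM FT inE.
have [A mA _] := minset_exists PT.
by have := none A; rewrite mA.
Qed.

Lemma Mmin_F i : Mmin F i \in F.
Proof. by have /minsetp /andP [] := Mmin_min i. Qed.
Lemma Mmin_in i : i \in Mmin F i.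
Proof. by have /minsetp /andP [] := Mmin_min i. Qed.
Lemma Mmin_sub {i A} : A \in F -> i \in A -> Mmin F i \subset A.
Proof.
move=> AF iA; case: (lam_cases (Mmin_F i) AF (Mmin_in i) iA) => // AM.
have PA : PM i A by rewrite /PM AF iA.
by rewrite (minsetinf (Mmin_min i) PA AM).
Qed.

Definition PC (B : {set U}) := fun E : {set U} => (E \in F) && (E \proper B).
Definition Ch (B : {set U}) : {set {set U}} := [set C | maxset (PC B) C].

Lemma Ch_F {B C : {set U}} : C \in Ch B -> C \in F.
Proof. by rewrite inE => /maxsetp /andP []. Qed.
Lemma Ch_proper {B C : {set U}} : C \in Ch B -> C \proper B.
Proof. by rewrite inE => /maxsetp /andP []. Qed.

Lemma Ch_exists {B D : {set U}} : D \in F -> D \proper B -> exists2 C, C \in Ch B & D \subset C.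
Proof.
move=> DF DB; have PD : PC B D by rewrite /PC DF DB.
by have [C mC DC] := maxset_exists PD; exists C; rewrite ?inE.
Qed.

Lemma Ch_uniq {B C1 C2 : {set U}} {i} : C1 \in Ch B -> C2 \in Ch B -> i \in C1 -> i \in C2 -> C1 = C2.
Proof.
move=> h1 h2 i1 i2.
case: (lam_cases (Ch_F h1) (Ch_F h2) i1 i2) => s.
  have P2 : PC B C2 by rewrite /PC (Ch_F h2) (Ch_proper h2).
  by move: h1; rewrite inE => /maxsetsup /(_ P2 s) ->.
have P1 : PC B C1 by rewrite /PC (Ch_F h1) (Ch_proper h1).
by move: h2; rewrite inE => /maxsetsup /(_ P1 s) ->.
Qed.

Lemma chain_dec B i (H : {set U} -> R) : B \in F -> i \in B ->
  \sum_(B' in Chain F (Mmin F i) B) H B' =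
  H B + \sum_(C in Ch B | i \in C) \sum_(B' in Chain F (Mmin F i) C) H B'.
Proof.
move=> BF iB.
rewrite (bigD1 B) /=; last by rewrite inE BF subxx (Mmin_sub BF iB).
congr (_ + _).
case: (pickP (fun C => (C \in Ch B) && (i \in C))) => [C0 /andP [C0ch iC0] | none].
  rewrite [in RHS](bigD1 C0) /=; last by rewrite C0ch iC0.
  rewrite [X in _ = _ + X]big1 ?addr0; last first.
    move=> C /andP [/andP [Cch iC] ne].
    by move: ne; rewrite (Ch_uniq Cch C0ch iC iC0) eqxx.
  apply: eq_bigl => B'; rewrite !inE; apply/idP/idP.
    case/andP => /and3P [B'F MB' B'B] ne.
    have pB' : B' \proper B by rewrite properEneq ne B'B.
    have [C Cch B'C] := Ch_exists B'F pB'.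
    have iC : i \in C := subsetP B'C _ (subsetP MB' _ (Mmin_in i)).
    by rewrite B'F MB' -(Ch_uniq Cch C0ch iC iC0).
  case/and3P => B'F MB' B'C0.
  have pC0 := Ch_proper C0ch.
  rewrite B'F MB' (subset_trans B'C0 (proper_sub pC0)) /=.
  apply/eqP => e; move: pC0; rewrite -e properE B'C0 /=.
  by rewrite andbF.
rewrite [in RHS]big_pred0; last by move=> C; apply: none.
rewrite big_pred0 // => B'; rewrite !inE; apply/negP.
case/andP => /and3P [B'F MB' B'B] ne.
have pB' : B' \proper B by rewrite properEneq ne B'B.
have [C Cch B'C] := Ch_exists B'F pB'.
have iC : i \in C := subsetP B'C _ (subsetP MB' _ (Mmin_in i)).
by have := none C; rewrite Cch iC.
Qed.


Definition rk (X : {set U}) i := #|[set j in X | w i < w j]|.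

Lemma r_lt {X : {set U}} {i j} : i \in X -> j \in X -> w i < w j -> (rk X j < rk X i)%N.
Proof.
move=> iX jX hij; apply: proper_card; apply/properP; split.
  apply/subsetP => z; rewrite !inE => /andP [zX hz].
  by rewrite zX (lt_trans hij hz).
by exists j; rewrite !inE ?jX ?hij ?ltxx.
Qed.

Lemma r_inj (X : {set U}) : {in X &, injective (rk X)}.
Proof.
move=> i j iX jX e; case: (ltgtP (w i) (w j)) => h.
- by have := r_lt iX jX h; rewrite e ltnn.
- by have := r_lt jX iX h; rewrite e ltnn.
- exact: winj.
Qed.

Lemma brank_r {X : {set U}} {i} : i \in X -> (brank w X i + rk X i).+1 = #|X|.
Proof.
move=> iX.
set lo := [set j in X | w j < w i]; set hi := [set j in X | w i < w j].
have e1 : X :\ i = lo :|: hi.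
  apply/setP => j; rewrite !inE; case jX: (j \in X); rewrite ?andbF //= andbT.
  case: (ltgtP (w j) (w i)) => h /=.
  - by apply/eqP => e; rewrite e ltxx in h.
  - by apply/eqP => e; rewrite e ltxx in h.
  - by rewrite (winj _ _ h) eqxx.
have e2 : lo :&: hi = set0.
  apply/eqP; rewrite -subset0; apply/subsetP => j; rewrite !inE.
  by case/andP => /andP [_ h1] /andP [_ h2]; have := lt_trans h1 h2; rewrite ltxx.
have := cardsUI lo hi; rewrite e2 cards0 -e1 addn0.
rewrite [#|X|](cardsD1 i) iX /brank /rk -/lo -/hi; lia.
Qed.

Lemma rank_sum (S : {set U}) (rho : U -> nat) m (phi : nat -> R) :
  {in S &, injective rho} -> (forall i, i \in S -> (rho i < m)%N) ->
  (forall t, 0 <= phi t) ->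
  \sum_(i in S) phi (rho i) <= \sum_(t < m) phi t.
Proof.
move=> rinj rlt phi0.
pose f := fun i => (inord (rho i) : 'I_m.+1).
have fK : forall i, i \in S -> nat_of_ord (f i) = rho i.
  by move=> i iS; rewrite /f inordK // ltnS ltnW // rlt.
have finj : {in S &, injective f}.
  by move=> i j iS jS e; apply: rinj => //; rewrite -(fK i) // -(fK j) // e.
rewrite (eq_bigr (fun i => (fun t : 'I_m.+1 => phi t) (f i))); last first.
  by move=> i iS /=; rewrite fK.
rewrite -(big_imset (fun t : 'I_m.+1 => phi t) finj) /=.
apply: (le_trans (@sum_sub R _ _ (fun t : 'I_m.+1 => (t < m)%N) _ _ _)).
- move=> t /imsetP [i iS ->]; rewrite fK //; exact: rlt.
- by move=> t _; apply: phi0.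
rewrite big_mkcond big_ord_recr /= ltnn addr0.
by rewrite le_eqVlt; apply/orP; left; apply/eqP; apply: eq_bigr => t _; rewrite ltn_ord.
Qed.


Variable c : R.
Hypothesis c0 : 0 < c.
Hypothesis c1 : c < 1.
Hypothesis mupos : forall A, A \in F -> (0 < mu A)%N.
Hypothesis mumono : forall A B, A \in F -> B \in F -> A \proper B -> (mu A < mu B)%N.

Definition GG i (C : {set U}) := \sum_(B' in Chain F (Mmin F i) C) c ^+ (1 + brank w (OPT B') i).

Lemma GG_ge0 i C : 0 <= GG i C.
Proof. by apply: sumr_ge0 => B' _; apply: exprn_ge0; apply: ltW. Qed.

Lemma count_ch (B : {set U}) i : (\sum_(C in Ch B | i \in C) 1 <= 1)%N.
Proof.
case: (pickP (fun C => (C \in Ch B) && (i \in C))) => [C0 /andP [C0ch iC0] | none].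
  rewrite (bigD1 C0) /=; last by rewrite C0ch iC0.
  rewrite big1 // => C /andP [/andP [Cch iC] ne].
  by move: ne; rewrite (Ch_uniq Cch C0ch iC iC0) eqxx.
by rewrite big_pred0.
Qed.

Lemma main_ind n : forall (B : {set U}) m, #|B| = n -> B \in F -> (m <= mu B)%N ->
  gfun F OPT w c m B <= fF c m (mu B).
Proof.
elim/ltn_ind: n => n IH B m eB BF hm.
set X := OPT B; set L := OPT_large w X m.
have LX : L \subset X by apply/subsetP => i; rewrite inE => /andP [].
have Lr : forall i, i \in L -> (rk X i < m)%N by move=> i; rewrite inE => /andP [].
have LB : forall i, i \in L -> i \in B.
  by move=> i iL; apply: (subsetP (OPT_sub BF)); apply: (subsetP LX).
have [K eK] : exists K, mu B = K.+1 by move: (mupos B BF); case: (mu B) => // K; exists K.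
have eg : gfun F OPT w c m B = \sum_(i in L) c ^+ (1 + brank w X i)
    + \sum_(C in Ch B) \sum_(i in L :&: C) GG i C.
  rewrite /gfun -/X -/L.
  rewrite (eq_bigr (fun i => c ^+ (1 + brank w X i) + \sum_(C in Ch B | i \in C) GG i C)); last first.
    by move=> i iL; rewrite (chain_dec B i _ BF (LB i iL)).
  rewrite big_split /=; congr (_ + _).
  rewrite (exchange_big_dep (fun C => C \in Ch B)) /=; last by move=> i C _ /andP [].
  apply: eq_bigr => C Cch; apply: eq_bigl => i; by rewrite in_setI Cch.
have Linj : {in L &, injective (rk X)}.
  by move=> i j iL jL; apply: r_inj; apply: (subsetP LX).
have hS0 : \sum_(i in L) c ^+ (1 + brank w X i) <= c ^+ (mu B - m) * csum c m.
  rewrite -(@geo R c c0 c1 m (mu B) hm).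
  rewrite (eq_bigr (fun i => c ^+ (mu B - rk X i))); last first.
    move=> i iL; congr (_ ^+ _); have h := brank_r (subsetP LX _ iL).
    have hX : #|X| = mu B := OPT_card BF; lia.
  apply: (rank_sum L (rk X) m (fun t => c ^+ (mu B - t)) Linj Lr).
  by move=> t; apply: exprn_ge0; apply: ltW.
have cardL : (#|L| <= m)%N.
  have := rank_sum L (rk X) m (fun _ => 1) Linj Lr (fun _ => ler01).
  by rewrite !sumr_const card_ord ler_nat.
have hC : forall C, C \in Ch B ->
    \sum_(i in L :&: C) GG i C <= fF c #|L :&: C| (mu C) /\ (#|L :&: C| <= mu C)%N.
  move=> C Cch; have CF := Ch_F Cch; have pC := Ch_proper Cch; have CB := proper_sub pC.
  have sub : L :&: C \subset OPT_large w (OPT C) #|L :&: C|.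
    apply/subsetP => i; rewrite in_setI => /andP [iL iC].
    have iX : i \in X := subsetP LX _ iL.
    have iOC : i \in OPT C by apply: (subsetP (F1 C B CF BF CB)); rewrite in_setI iX iC.
    rewrite inE iOC /=.
    have sub2 : [set j in OPT C | w i < w j] \subset (L :&: C) :\ i.
      apply/subsetP => j; rewrite inE => /andP [jOC hij].
      have jX : j \in X := F2 CF BF CB iX iC jOC hij.
      have jC : j \in C := subsetP (OPT_sub CF) _ jOC.
      have jL : j \in L.
        rewrite inE jX /=; exact: (ltn_trans (r_lt iX jX hij) (Lr i iL)).
      rewrite in_setD1 in_setI jL jC /= andbT; apply/eqP => e; by rewrite e ltxx in hij.
    rewrite (cardsD1 i (L :&: C)) in_setI iL iC add1n ltnS.
    exact: subset_leq_card sub2.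
  have aC : (#|L :&: C| <= mu C)%N.
    rewrite -(OPT_card CF); apply: subset_leq_card; apply: (subset_trans sub).
    by apply/subsetP => i; rewrite inE => /andP [].
  split=> //.
  have ltC : (#|C| < n)%N by rewrite -eB; exact: proper_card pC.
  apply: (le_trans _ (IH #|C| ltC C _ erefl CF aC)).
  rewrite /gfun; apply: sum_sub; first by move=> i; apply: (subsetP sub).
  by move=> i _; apply: GG_ge0.
have sumA : (\sum_(C in Ch B) #|L :&: C| <= m)%N.
  have e : (\sum_(C in Ch B) #|L :&: C| = \sum_(i in L) \sum_(C in Ch B | i \in C) 1)%N.
    rewrite (exchange_big_dep (fun C => C \in Ch B)) /=; last by move=> i C _ /andP [].
    apply: eq_bigr => C Cch; rewrite -sum1_card; apply: eq_bigl => i; by rewrite in_setI Cch.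
  rewrite e; apply: (leq_trans _ cardL); rewrite -sum1_card; apply: leq_sum => i _.
  exact: count_ch.
have hm' : (m <= K.+1)%N by rewrite -eK.
rewrite eg.
apply: (le_trans (lerD hS0 (ler_sum _ (fun C Cch => proj1 (hC C Cch))))).
rewrite eK -(@top R c c0 c1 K m hm') lerD2l.
apply: (le_trans (@children_sum R c c0 c1 K _ _ (fun C => C \in Ch B)
   (fun C => #|L :&: C|) mu _ _)).
- move=> C Cch; split; first exact: (proj2 (hC C Cch)).
  by rewrite -ltnS -eK; apply: mumono => //; [exact: Ch_F Cch | exact: Ch_proper Cch].
- exact: leq_trans sumA hm'.
- exact: (@Tmono R c c0 c1 K _ _ sumA hm').
Qed.


End Comb.

Close Scope ring_scope.

Theorem mainTheorem4 (U : finType) (R : realFieldType)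
  (w : U -> R) (F : {set {set U}}) (mu : {set U} -> nat)
  (OPT : {set U} -> {set U}) (c : R) :
  (forall i, (0 <= w i)%R) ->
  injective w ->
  laminar F ->
  setT \in F ->
  (forall A, A \in F -> 0 < mu A) ->
  (forall A B, A \in F -> B \in F -> A \proper B -> mu A < mu B) ->
  (forall B, B \in F -> is_OPT F mu w B (OPT B)) ->
  (0 < c)%R -> (c < 1 / 2)%R ->
  forall (B : {set U}) (m : nat), B \in F -> m <= mu B ->
  (gfun F OPT w c m B <=
     \sum_(1 <= j < m) 2 * csum c j + csum c m
     + csum c m * csum c (mu B - m))%R.
Proof.
move=> w0 winj lam FT mupos mumono hOPT c0 c1 B m BF hm.
have c1' : (c < 1)%R by move: c1; lra.
by apply: (@main_ind U R w F mu OPT winj lam FT hOPT c c0 c1' mupos mumono #|B|).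
Qed.
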